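(* Let $R$ be a unital ring and $E$ a finite directed graph satisfying Condition (NE). Then there exists a non-negative integer $k$ such that $(L_R(E))_0=\bigcup_{m=0}^{k}C_m$. In particular, $(L_R(E))_0$ is a finitely generated $R$-module.
   Context: A directed graph $E=(E^0,E^1,s,r)$ has vertex set $E^0$, edge set $E^1$, source and range maps $s,r\colon E^1\to E^0$; it is finite if $E^0,E^1$ are finite. A path is a sequence of edges $f_1\cdots f_n$ with $s(f_{i+1})=r(f_i)$, of length $\mathrm{len}=n$; a cycle is a path with $s(f_1)=r(f_n)$ and $s(f_i)\neq s(f_1)$ for $2\le i\le n$; it has an exit if some edge $f$ satisfies $s(f)=s(f_i)$ for some $i$ with $f\neq f_i$. Condition (NE): no cycle has an exit. The Leavitt path algebra $L_R(E)$ is the $R$-algebra generated by $v\in E^0$, $f,f^*$ ($f\in E^1$), with $R$ commuting with generators, subject to $v_iv_j=\delta_{i,j}v_i$; $s(f)f=fr(f)=f$, $r(f)f^*=f^*s(f)=f^*$; $f^*f'=\delta_{f,f'}r(f)$; and $\sum_{s(f)=v}ff^*=v$ whenever $s^{-1}(v)$ is nonempty and finite. For a path $\alpha=f_1\cdots f_n$, $\alpha^*=f_n^*\cdots f_1^*$ (vertices are paths of length 0 with $v^*=v$). Every element of $L_R(E)$ is a finite sum $\sum r_i\alpha_i\beta_i^*$ with $r_i\in R$ and $\alpha_i,\beta_i$ paths. The canonical $\mathbb{Z}$-grading has $(L_R(E))_n$ equal to the set of such sums with $\mathrm{len}(\alpha_i)-\mathrm{len}(\beta_i)=n$ for all $i$.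 For $m\ge 0$, $C_m=\mathrm{Span}_R\{\alpha\beta^*:\mathrm{len}(\alpha)=\mathrm{len}(\beta)=m\}$. *)

(* Defs.v *)
From HB Require Import structures.
From mathcomp Require Import all_boot all_order all_algebra.
Set Implicit Arguments. Unset Strict Implicit. Unset Printing Implicit Defensive.
Import GRing.Theory.
Local Open Scope ring_scope.

(* A path is represented by its source vertex
   together with its list of edges (so that length-0 paths are vertices). *)

Section Graph.
Variables (V Ed : finType) (s r : Ed -> V).

Fixpoint path_ok (v : V) (p : seq Ed) : bool :=
  match p with
  | [::] => true
  | f :: p' => (s f == v) && path_ok (r f) p'
  end.

Fixpoint path_end (v : V) (p : seq Ed) : V :=
  match p with
  | [::] => v
  | f :: p' => path_end (r f) p'
  end.

Definition is_cycle (c : seq Ed) : Prop :=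
  exists (f1 : Ed) (c' : seq Ed),
    c = f1 :: c' /\ path_ok (s f1) c /\ path_end (s f1) c = s f1 /\
    (forall f, f \in c' -> s f != s f1).

Definition has_exit (c : seq Ed) : Prop :=
  exists f g : Ed, g \in c /\ s f = s g /\ f != g.

Definition cond_NE : Prop := forall c, is_cycle c -> ~ has_exit c.

End Graph.

Section Leavitt.
Variables (V Ed : finType) (s r : Ed -> V) (R : pzRingType).

(* An algebra over R in which R "commutes with the generators" is modelled as
   a ring A together with a unital ring morphism iota : R -> A; scalars act by
   left multiplication with iota.  A Leavitt E-family in A consists of
   elements vtx v, edg f (= f), gst f (= f^* ) satisfying the relations. *)
Definition leavitt_family (A : pzRingType) (iota : R -> A)
    (vtx : V -> A) (edg gst : Ed -> A) : Prop :=
  [/\ (forall (a : R) v, iota a * vtx v = vtx v * iota a),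
      (forall (a : R) f, iota a * edg f = edg f * iota a) &
      (forall (a : R) f, iota a * gst f = gst f * iota a)] /\
  [/\
      (forall v w, vtx v * vtx w = if v == w then vtx v else 0),
      (forall f, vtx (s f) * edg f = edg f /\ edg f * vtx (r f) = edg f /\
                 vtx (r f) * gst f = gst f /\ gst f * vtx (s f) = gst f),
      (forall f f', gst f * edg f' = if f == f' then vtx (r f) else 0) &
      (* CK2 at every non-sink (s^{-1}(v) is automatically finite) *)
      (forall v, (exists f, s f = v) ->
         \sum_(f | s f == v) edg f * gst f = vtx v)].

(* (A, iota, vtx, edg, gst) is the Leavitt path algebra L_R(E): it carries a
   Leavitt E-family and is universal (the algebra presented by these
   generators and relations): for every other such (B, iotaB, family) there is
   a unique (not necessarily unital) R-algebra morphism A -> B sending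
   generators to generators. *)
Definition is_leavitt_path_algebra (A : pzRingType) (iota : {rmorphism R -> A})
    (vtx : V -> A) (edg gst : Ed -> A) : Prop :=
  leavitt_family iota vtx edg gst /\
  forall (B : pzRingType) (iotaB : {rmorphism R -> B})
         (vB : V -> B) (eB gB : Ed -> B),
    leavitt_family iotaB vB eB gB ->
    let is_hom (phi : A -> B) :=
      [/\ forall x y, phi (x + y) = phi x + phi y,
          forall x y, phi (x * y) = phi x * phi y,
          forall (a : R) x, phi (iota a * x) = iotaB a * phi x,
          forall v, phi (vtx v) = vB v &
          forall f, phi (edg f) = eB f /\ phi (gst f) = gB f] in
    exists phi : A -> B, is_hom phi /\
      forall psi : A -> B, is_hom psi -> forall x, psi x = phi x.

Variables (A : pzRingType) (iota : {rmorphism R -> A})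
          (vtx : V -> A) (edg gst : Ed -> A).

Definition path_elt (v : V) (p : seq Ed) : A :=
  if p is [::] then vtx v else \prod_(f <- p) edg f.

Definition ghost_elt (v : V) (p : seq Ed) : A :=
  if p is [::] then vtx v else \prod_(f <- rev p) gst f.

Definition pair_paths := ((V * seq Ed) * (V * seq Ed))%type.

Definition in_span (P : pred pair_paths) (x : A) : Prop :=
  exists l : seq (R * pair_paths),
    all (fun t : R * pair_paths =>
           [&& path_ok s r t.2.1.1 t.2.1.2, path_ok s r t.2.2.1 t.2.2.2 & P t.2]) l
    /\ x = \sum_(t <- l) iota t.1 * path_elt t.2.1.1 t.2.1.2
                                   * ghost_elt t.2.2.1 t.2.2.2.

Definition degree0 (x : A) : Prop :=
  in_span (fun t : pair_paths => size t.1.2 == size t.2.2) x.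

Definition C_m (m : nat) (x : A) : Prop :=
  in_span (fun t : pair_paths => (size t.1.2 == m) && (size t.2.2 == m)) x.

Definition in_sum_C (k : nat) (x : A) : Prop :=
  exists xs : 'I_k.+1 -> A, (forall m : 'I_k.+1, C_m m (xs m)) /\
                            x = \sum_(m < k.+1) xs m.

Definition degree0_fin_gen : Prop :=
  exists g : seq A, forall x, degree0 x <->
    exists c : 'I_(size g) -> R, x = \sum_(i < size g) iota (c i) * g`_i.

End Leavitt.

(* Main.v *)
Require Import Defs.
From HB Require Import structures.
From mathcomp Require Import all_boot all_order all_algebra.
Set Implicit Arguments. Unset Strict Implicit. Unset Printing Implicit Defensive.

Section Comb.
Variables (V Ed : finType) (s r : Ed -> V).
Hypothesis NE : cond_NE s r.

Lemma path_ok_cat v a b : path_ok s r v (a ++ b) = path_ok s r v a && path_ok s r (path_end r v a) b.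
Proof. by elim: a v => [|f a IH] v //=; rewrite IH andbA. Qed.

Lemma path_end_cat v a b : path_end r v (a ++ b) = path_end r (path_end r v a) b.
Proof. by elim: a v => [|f a IH] v //=. Qed.

Lemma split_src (u : V) (p : seq Ed) :
  (forall h, h \in p -> s h != u) \/
  exists q h t, p = q ++ h :: t /\ s h = u /\ (forall g, g \in q -> s g != u).
Proof.
elim: p => [|f p [IH|[q [h [t [-> [Hh Hq]]]]]]]; first by left.
- case: (eqVneq (s f) u) => Hf.
    by right; exists [::], f, p.
  left => h; rewrite inE => /orP [/eqP->//|]; exact: IH.
- case: (eqVneq (s f) u) => Hf.
    by right; exists [::], f, (q ++ h :: t).
  right; exists (f :: q), h, t; split => //; split => // g.
  by rewrite inE => /orP [/eqP->//|]; exact: Hq.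
Qed.

Lemma closed_uniq n : forall p u, size p <= n -> path_ok s r u p -> path_end r u p = u ->
  forall g, g \in p -> forall f, s f = s g -> f = g.
Proof.
elim: n => [|n IHn] [|f1 p'] u //= Hsz /andP [/eqP Hf1 Hp] He g Hg f Hfg.
have cyc : forall q, path_ok s r (r f1) q -> path_end r (r f1) q = u ->
    (forall g, g \in q -> s g != u) -> forall g, g \in f1 :: q -> forall f, s f = s g -> f = g.
  move=> q Hq Hqe Hqs g0 Hg0 f0 Hf0.
  have Hc : is_cycle s r (f1 :: q).
    exists f1, q; split => //; split; first by rewrite /= eqxx Hq.
    by split; [rewrite /= Hqe Hf1 | move=> h Hh; rewrite Hf1; exact: Hqs].
  apply/eqP; apply/negPn/negP => Hne.
  by apply: (NE Hc); exists f0, g0.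
case: (split_src u p') => [Hall|[q [h [t [Ep [Hh Hq]]]]]].
  exact: (cyc p').
move: Hp He Hg; rewrite Ep path_ok_cat path_end_cat /= => /and3P [Hq1 /eqP Hh1 Ht].
move=> He; rewrite -cat1s catA mem_cat => /orP [Hg|Hg].
- apply: (cyc q) Hg _ Hfg => //; by rewrite -Hh1.
- apply: (IHn (h :: t) u) Hg _ Hfg.
  + move: Hsz; rewrite Ep size_cat /= ltnS => H; apply: leq_trans _ H; exact: leq_addl.
  + by rewrite /= Hh eqxx Ht.
  + by [].
Qed.

Definition Q u := exists p, [/\ path_ok s r u p, p != [::] & path_end r u p = u].

Lemma Q_uniq u f g : Q u -> s f = u -> s g = u -> f = g.
Proof.
case=> [[|f1 p]] [Hp // _ He] Hf Hg.
have H1 : f1 \in f1 :: p by rewrite inE eqxx.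
have Hs : s f1 = u by case/andP: Hp => /eqP.
rewrite (closed_uniq (leqnn _) Hp He H1 (f := f)) ?Hf //.
by rewrite (closed_uniq (leqnn _) Hp He H1 (f := g)) ?Hg.
Qed.

Lemma Q_next u f : Q u -> s f = u -> Q (r f).
Proof.
move=> HQ Hf; case: (HQ) => [[|f1 p]] [Hp // _ He].
have Hs : s f1 = u by case/andP: Hp => /eqP.
have -> : f = f1 by apply: (Q_uniq HQ).
exists (p ++ [:: f1]); split.
- have Hp' : path_ok s r (r f1) p by case/andP: Hp.
  have He' : path_end r (r f1) p = u by [].
  by rewrite path_ok_cat Hp' /= He' Hs eqxx.
- by case: p {Hp He}.
- by rewrite path_end_cat.
Qed.

Lemma Q_forced u q : Q u -> path_ok s r u q ->
  (forall g, g \in q -> Q (s g)) /\ Q (path_end r u q).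
Proof.
elim: q u => [|f q IH] u HQ //= /andP [/eqP Hf Hq].
have HQ' := Q_next HQ Hf.
have [H1 H2] := IH _ HQ' Hq; split => // g; rewrite inE => /orP [/eqP->|]; last exact: H1.
by rewrite Hf.
Qed.

Definition nxt (u : V) : V := if [pick e | s e == u] is Some e then r e else u.

Lemma nxtE u f : Q u -> s f = u -> nxt u = r f.
Proof.
move=> HQ Hf; rewrite /nxt; case: pickP => [e /eqP He|H].
  by rewrite (Q_uniq HQ He Hf).
by move: (H f); rewrite Hf eqxx.
Qed.

Lemma Q_iter u q : Q u -> path_ok s r u q -> path_end r u q = iter (size q) nxt u.
Proof.
elim: q u => [|f q IH] u HQ //= /andP [/eqP Hf Hq].
by rewrite (IH _ (Q_next HQ Hf) Hq) -iterS iterSr (nxtE HQ Hf).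
Qed.

Lemma Q_period u : Q u -> exists m, 0 < m /\ iter m nxt u = u.
Proof.
move=> HQ; case: (HQ) => p [Hp Hn He]; exists (size p); split.
  by case: p Hn {Hp He}.
by rewrite -(Q_iter HQ Hp).
Qed.

Lemma iter_mul m j u : iter m nxt u = u -> iter (m * j) nxt u = u.
Proof.
move=> H; elim: j => [|j IH]; first by rewrite muln0.
by rewrite mulnS iterD IH H.
Qed.

Lemma nxt_inj u u' : Q u -> Q u' -> nxt u = nxt u' -> u = u'.
Proof.
move=> /Q_period [m [Hm Hu]] /Q_period [m' [Hm' Hu']] E.
have M : 0 < m * m' by rewrite muln_gt0 Hm.
have := iter_mul m' Hu; have := iter_mul m Hu'.
rewrite mulnC -(prednK M) !iterSr E => -> ->.
done.
Qed.

Lemma notuniq_split v p : path_ok s r v p -> ~~ uniq (v :: map r p) ->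
  exists p1 p2 p3, [/\ p = p1 ++ p2 ++ p3, p2 != [::] & path_end r v (p1 ++ p2) = path_end r v p1].
Proof.
elim: p v => [|f p IH] v //= /andP [/eqP Hf Hp].
rewrite negb_and negbK inE => /orP [/orP [/eqP Hv|]|].
- by exists [::], [:: f], p; rewrite Hv.
- case/mapP => g Hg Hv.
  case/splitPr: Hg Hp => q1 q2 Hp.
  exists [::], (f :: rcons q1 g), q2; split => //=.
  + by rewrite cat_rcons.
  + move: Hp; rewrite -cat_rcons path_ok_cat => /andP [H _].
    rewrite -cats1 path_end_cat /=. by rewrite Hv.
- move=> /(IH _ Hp) [p1 [p2 [p3 [-> H2 H3]]]].
  by exists (f :: p1), p2, p3.
Qed.

Lemma long_last v p : path_ok s r v p -> #|V| <= size p ->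
  exists a f, p = rcons a f /\ Q (s f).
Proof.
move=> Hp Hsz.
have Hnu : ~~ uniq (v :: map r p).
  apply/negP => /card_uniqP H.
  have := max_card (mem (v :: map r p)); rewrite H /= size_map.
  by rewrite ltnNge Hsz.
have [p1 [p2 [p3 [Ep Hn He]]]] := notuniq_split Hp Hnu.
move: Hp; rewrite Ep path_ok_cat => /andP [_].
rewrite path_ok_cat => /andP [H2 H3].
have HQ : Q (path_end r v p1).
  by exists p2; split => //; rewrite -path_end_cat.
have Hpq : path_ok s r (path_end r v p1) (p2 ++ p3) by rewrite path_ok_cat H2 H3.
have [Hall _] := Q_forced HQ Hpq.
case E: (p2 ++ p3) Hall => [|x l] Hall; first by move: Hn E; case: (p2).
exists (p1 ++ belast x l), (last x l); split; first by rewrite rcons_cat -lastI.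
by apply: Hall; rewrite mem_last.
Qed.

End Comb.

Import GRing.Theory.
Local Open Scope ring_scope.

Section Alg.
Variables (R : pzRingType) (V Ed : finType) (s r : Ed -> V) (A : pzRingType)
  (iota : {rmorphism R -> A}) (vtx : V -> A) (edg gst : Ed -> A).
Hypothesis LF : leavitt_family s r iota vtx edg gst.

Lemma vvE v w : vtx v * vtx w = if v == w then vtx v else 0.
Proof. by case: LF => _ [H _ _ _]. Qed.
Lemma efE f : vtx (s f) * edg f = edg f /\ edg f * vtx (r f) = edg f /\
                 vtx (r f) * gst f = gst f /\ gst f * vtx (s f) = gst f.
Proof. by case: LF => _ [_ H _ _]. Qed.
Lemma ckE v : (exists f, s f = v) -> \sum_(f | s f == v) edg f * gst f = vtx v.
Proof. by case: LF => _ [_ _ _ H]; apply: H. Qed.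

Local Notation pe := (path_elt vtx edg).
Local Notation ge := (ghost_elt vtx gst).

Lemma path_ok_rcons v a f : path_ok s r v (rcons a f) = path_ok s r v a && (s f == path_end r v a).
Proof. by rewrite -cats1 path_ok_cat /= andbT. Qed.

Lemma path_end_rcons v a f : path_end r v (rcons a f) = r f.
Proof. by rewrite -cats1 path_end_cat. Qed.

Lemma pe_rcons v a f : path_ok s r v (rcons a f) -> pe v (rcons a f) = pe v a * edg f.
Proof.
case: a => [|h a] /=.
  by rewrite andbT => /eqP <-; rewrite big_seq1 (efE f).1.
move=> _; have -> : h :: rcons a f = rcons (h :: a) f by [].
by rewrite big_rcons.
Qed.

Lemma ge_rcons w b g : path_ok s r w (rcons b g) -> ge w (rcons b g) = gst g * ge w b.
Proof.
case: b => [|h b] /=.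
  by rewrite andbT => /eqP <-; rewrite big_seq1 (efE g).2.2.2.
move=> _; have -> : h :: rcons b g = rcons (h :: b) g by [].
by rewrite rev_rcons big_cons.
Qed.

Lemma pe_end v a : path_ok s r v a -> pe v a * vtx (path_end r v a) = pe v a.
Proof.
elim/last_ind: a => [|a f IH] /=; first by rewrite vvE eqxx.
move=> H; rewrite path_end_rcons (pe_rcons H) -mulrA (efE f).2.1 //.
Qed.

Lemma ef_gst f g : r f != r g -> edg f * gst g = 0.
Proof.
move=> H; rewrite -(efE f).2.1 -(efE g).2.2.1 mulrA -(mulrA (edg f)) vvE.
by rewrite (negbTE H) mulr0 mul0r.
Qed.

Lemma ck1 f : (forall f', s f' = s f -> f' = f) -> edg f * gst f = vtx (s f).
Proof.
move=> H; rewrite -ckE; last by exists f.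
rewrite (eq_bigl (pred1 f)) ?big_pred1_eq // => f' /=.
by apply/eqP/eqP => [/H|->].
Qed.

Hypothesis NE : cond_NE s r.

Definition eltp (v : V) a (w : V) b := pe v a * ge w b.

Lemma reduce n : forall v a w b, path_ok s r v a -> path_ok s r w b ->
  size a = n -> size b = n ->
  eltp v a w b = 0 \/ exists v' a' w' b', [/\ path_ok s r v' a' && path_ok s r w' b',
     size a' = size b', (size a' <= #|V|)%N & eltp v' a' w' b' = eltp v a w b].
Proof.
elim: n => [|n IH] v a w b Ha Hb Hsa Hsb.
  by right; exists v, a, w, b; rewrite Ha Hb Hsa Hsb.
case: (leqP n.+1 #|V|) => Hn.
  by right; exists v, a, w, b; rewrite Ha Hb Hsa Hsb.
have HaV : (#|V| <= size a)%N by rewrite Hsa ltnW.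
have HbV : (#|V| <= size b)%N by rewrite Hsb ltnW.
have [a' [f [Ea Qf]]] := long_last NE Ha HaV.
have [b' [g [Eb Qg]]] := long_last NE Hb HbV.
subst a b.
rewrite /eltp (pe_rcons Ha) (ge_rcons Hb) mulrA -(mulrA _ (edg f)).
case: (eqVneq (r f) (r g)) => Hfg; last by left; rewrite ef_gst // mulr0 mul0r.
have Esfg : s f = s g.
  by apply: (nxt_inj NE Qf Qg); rewrite (nxtE NE Qf erefl) (nxtE NE Qg erefl).
have Efg : f = g by apply: (Q_uniq NE Qf).
subst g.
rewrite ck1; last by move=> f' Hf'; apply: (Q_uniq NE Qf).
move: (Ha); rewrite path_ok_rcons => /andP [Ha' /eqP Hend].
move: (Hb); rewrite path_ok_rcons => /andP [Hb' _].
rewrite Hend pe_end //.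
apply: (IH v a' w b') => //.
  by move: Hsa; rewrite size_rcons => -[].
by move: Hsb; rewrite size_rcons => -[].
Qed.

End Alg.

Fixpoint seqs (T : finType) (m : nat) : seq (seq T) :=
  if m is m'.+1 then [seq f :: t | f <- enum T, t <- seqs T m'] else [:: [::]].

Lemma mem_seqs (T : finType) (t : seq T) : t \in seqs T (size t).
Proof.
elim: t => [|f t IH] /=; first by rewrite inE.
by apply: (allpairs_f (fun f t => f :: t)) => //; rewrite mem_enum.
Qed.

Section Final.
Variables (R : pzRingType) (V Ed : finType) (s r : Ed -> V) (A : pzRingType)
  (iota : {rmorphism R -> A}) (vtx : V -> A) (edg gst : Ed -> A).

Local Notation pe := (path_elt vtx edg).
Local Notation ge := (ghost_elt vtx gst).
Local Notation span := (in_span s r iota vtx edg gst).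

Lemma span_ind (P : pred (pair_paths V Ed)) (Pr : A -> Prop) : Pr 0 ->
  (forall x y, Pr x -> Pr y -> Pr (x + y)) ->
  (forall c v a w b, path_ok s r v a -> path_ok s r w b -> P ((v, a), (w, b)) ->
     Pr (iota c * pe v a * ge w b)) ->
  forall x, span P x -> Pr x.
Proof.
move=> H0 HD HT x [l [Hl ->]].
elim: l Hl => [|[c [[v a] [w b]]] l IH] /=; first by rewrite big_nil.
case/andP => /and3P [H1 H2 H3] Hl; rewrite big_cons; apply: HD; last exact: IH.
exact: HT.
Qed.

Lemma span_term (P : pred (pair_paths V Ed)) c v a w b : path_ok s r v a -> path_ok s r w b ->
  P ((v, a), (w, b)) -> span P (iota c * pe v a * ge w b).
Proof.
move=> H1 H2 H3; exists [:: (c, ((v, a), (w, b)))]; split; first by rewrite /= H1 H2 H3.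
by rewrite big_seq1.
Qed.

Lemma span0 (P : pred (pair_paths V Ed)) : span P 0.
Proof. by exists [::]; rewrite big_nil. Qed.

Lemma spanD (P : pred (pair_paths V Ed)) x y : span P x -> span P y -> span P (x + y).
Proof.
move=> [l1 [H1 ->]] [l2 [H2 ->]]; exists (l1 ++ l2); split; first by rewrite all_cat H1 H2.
by rewrite big_cat.
Qed.

Lemma span_mono (P P' : pred (pair_paths V Ed)) x : (forall q, P q -> P' q) -> span P x -> span P' x.
Proof.
move=> HP; apply: span_ind; [exact: span0 | exact: spanD |].
by move=> c v a w b H1 H2 H3; apply: span_term => //; apply: HP.
Qed.

Lemma sumC0 k : in_sum_C s r iota vtx edg gst k 0.
Proof.
exists (fun _ => 0); split; first by move=> m; exact: span0.
by rewrite big1.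
Qed.

Lemma sumCD k x y : in_sum_C s r iota vtx edg gst k x -> in_sum_C s r iota vtx edg gst k y ->
  in_sum_C s r iota vtx edg gst k (x + y).
Proof.
move=> [xs [Hx ->]] [ys [Hy ->]]; exists (fun m => xs m + ys m); split.
  by move=> m; apply: spanD (Hx m) (Hy m).
by rewrite big_split.
Qed.

Lemma sumC_of_C k m x : (m <= k)%N -> C_m s r iota vtx edg gst m x ->
  in_sum_C s r iota vtx edg gst k x.
Proof.
move=> Hm Hx; pose i0 : 'I_k.+1 := inord m.
have Hi0 : nat_of_ord i0 = m by rewrite inordK.
exists (fun j => if j == i0 then x else 0); split.
  move=> j; case: (eqVneq j i0) => [->|_]; last exact: span0.
  by rewrite Hi0.
rewrite (bigD1 i0) //= eqxx big1 ?addr0 // => j /negbTE ->.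
by [].
Qed.

End Final.

Theorem proposition4p5 (R : pzRingType) (V Ed : finType) (s r : Ed -> V)
    (A : pzRingType) (iota : {rmorphism R -> A})
    (vtx : V -> A) (edg gst : Ed -> A) :
  cond_NE s r ->
  is_leavitt_path_algebra s r iota vtx edg gst ->
  (exists k : nat, forall x : A,
     degree0 s r iota vtx edg gst x <-> in_sum_C s r iota vtx edg gst k x) /\
  degree0_fin_gen s r iota vtx edg gst.
Proof.
move=> NE [LF _].
have term : forall c v a w b, path_ok s r v a -> path_ok s r w b -> size a = size b ->
  iota c * path_elt vtx edg v a * ghost_elt vtx gst w b = 0 \/
  exists v' a' w' b', [/\ path_ok s r v' a' && path_ok s r w' b',
     size a' = size b', (size a' <= #|V|)%N &
     iota c * path_elt vtx edg v' a' * ghost_elt vtx gst w' b' =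
     iota c * path_elt vtx edg v a * ghost_elt vtx gst w b].
  move=> c v a w b Ha Hb Hs.
  case: (reduce LF NE Ha Hb erefl (esym Hs)) => [H|[v' [a' [w' [b' [H1 H2 H3 H4]]]]]].
    by left; rewrite -mulrA; move: H; rewrite /eltp => ->; rewrite mulr0.
  right; exists v', a', w', b'; split => //.
  by rewrite -!mulrA; move: H4; rewrite /eltp => ->.
split.
  exists #|V| => x; split.
    apply: span_ind; [exact: sumC0 | exact: sumCD |].
    move=> c v a w b Ha Hb /eqP Hs.
    case: (term c v a w b Ha Hb Hs) => [->|[v' [a' [w' [b' [/andP [H1 H2] H3 H4 <-]]]]]].
      exact: sumC0.
    apply: (sumC_of_C H4); apply: span_term => //=.
    by rewrite H3 eqxx.
  move=> [xs [Hxs ->]].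
  apply: (big_ind (degree0 s r iota vtx edg gst)); [exact: span0 | exact: spanD |].
  move=> m _; apply: span_mono (Hxs m) => q /andP [/eqP -> /eqP ->].
  by [].
pose paths := flatten [seq seqs Ed m | m <- seq.iota 0 #|V|.+1].
pose VP := [seq (v, a) | v <- enum V, a <- paths].
pose PL := [seq q <- [seq (x, y) | x <- VP, y <- VP] |
  [&& path_ok s r q.1.1 q.1.2, path_ok s r q.2.1 q.2.2 & size q.1.2 == size q.2.2]].
pose g := [seq path_elt vtx edg q.1.1 q.1.2 * ghost_elt vtx gst q.2.1 q.2.2 | q <- PL].
exists g => x; split.
  have comb0 : exists c : 'I_(size g) -> R, (0 : A) = \sum_(i < size g) iota (c i) * g`_i.
    by exists (fun _ => 0); rewrite big1 // => i _; rewrite rmorph0 mul0r.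
  apply: (span_ind (Pr := fun x => exists c : 'I_(size g) -> R, x = \sum_(i < size g) iota (c i) * g`_i)) => //.
    move=> x1 y1 [c1 ->] [c2 ->]; exists (fun i => c1 i + c2 i).
    by rewrite -big_split; apply: eq_bigr => i _; rewrite rmorphD mulrDl.
  move=> c v a w b Ha Hb /eqP Hs.
  case: (term c v a w b Ha Hb Hs) => [->|[v' [a' [w' [b' [Hok H3 H4 <-]]]]]] //.
  have Hp : forall t : seq Ed, (size t <= #|V|)%N -> t \in paths.
    move=> t Ht; apply/flatten_mapP; exists (size t); last exact: mem_seqs.
    by rewrite mem_iota /= add0n ltnS.
  have Hq : ((v', a'), (w', b')) \in PL.
    case/andP: Hok => Ho1 Ho2; rewrite mem_filter /= Ho1 Ho2 H3 eqxx /=.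
    apply: (allpairs_f (fun x y => (x, y))); apply: (allpairs_f (fun v a => (v, a)));
      rewrite ?mem_enum //; apply: Hp => //; by rewrite -H3.
  have Hy := map_f (fun q : pair_paths V Ed =>
     path_elt vtx edg q.1.1 q.1.2 * ghost_elt vtx gst q.2.1 q.2.2) Hq.
  rewrite -/g /= in Hy.
  have Hi : (index (path_elt vtx edg v' a' * ghost_elt vtx gst w' b')%R g < size g)%N
    by rewrite index_mem.
  pose i0 : 'I_(size g) := Ordinal Hi.
  exists (fun j => if j == i0 then c else 0).
  rewrite (bigD1 i0) //= eqxx big1 ?addr0; last first.
    by move=> j /negbTE ->; rewrite rmorph0 mul0r.
  by rewrite nth_index // mulrA.
move=> [c ->].
apply: (big_ind (degree0 s r iota vtx edg gst)); [exact: span0 | exact: spanD |].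
move=> i _.
have : g`_i \in g by apply: mem_nth.
case/mapP => q; rewrite mem_filter => /andP [/and3P [H1 H2 H3] _] ->.
rewrite mulrA; case: q H1 H2 H3 => [[v a] [w b]] H1 H2 H3.
exact: span_term.
Qed.
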